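(* Let $N\ge1$, $K\ge2$ be integers with $K$ even and $N$ divisible by $K$, and let $\alpha\in[0,1)$. Put $K^*=\frac{NK}{2N+K}\left(1-\frac{\alpha}{2-\alpha}\right)$. Let $s\in S$ be a pure strategy such that the number of battlefields $k$ with $s_k>0$ is strictly less than $K^*$. Then $s$ is not used with positive probability in any Nash equilibrium of $\mathcal{B}_\alpha(N,K)$: for every Nash equilibrium $(\sigma^A,\sigma^B)$ one has $\sigma^A(s)=\sigma^B(s)=0$.
   Context: Fix integers $N\ge1$, $K\ge2$ and a real number $\alpha$. The Colonel Blotto game $\mathcal{B}_\alpha(N,K)$ is the two-player simultaneous-move game with players $A,B$, each with pure strategy set $S=\{s\in\{0,1,\ldots,N\}^K:\sum_{k=1}^K s_k=N\}$, in which the payoff of player $i$ at the pure profile $(s^i,s^{-i})$ is $\pi^i(s^i,s^{-i})=\sum_{k=1}^K\big(\mathbf 1[s^i_k>s^{-i}_k]+\tfrac{\alpha}{2}\mathbf 1[s^i_k=s^{-i}_k]\big)$. Mixed strategies are probability distributions on $S$, with expected payoffs under independent randomization; a Nash equilibrium is a mixed profile from which no unilateral deviation raises a player's expected payoff. *)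

(* Defs.v *)
From HB Require Import structures.
From mathcomp Require Import all_boot all_order all_algebra.
From mathcomp Require Import reals.
Set Implicit Arguments. Unset Strict Implicit. Unset Printing Implicit Defensive.
Import Order.TTheory GRing.Theory Num.Theory.
Local Open Scope ring_scope.

Definition alloc (N K : nat) := {ffun 'I_K -> 'I_N.+1}.

Definition in_S (N K : nat) (s : alloc N K) : bool :=
  (\sum_(k < K) (s k : nat) == N)%N.

Definition payoff {R : realType} (alpha : R) (N K : nat) (s t : alloc N K) : R :=
  \sum_(k < K) (((s k : nat) > t k)%N%:R
                + alpha / 2%:R * ((s k : nat) == t k)%:R).

Definition mixed {R : realType} (N K : nat) (sigma : {ffun alloc N K -> R}) : Prop :=
  (forall s, 0 <= sigma s) /\ (forall s, ~~ in_S s -> sigma s = 0) /\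
  \sum_s sigma s = 1.

(* Expected payoff of a player using sigma against an opponent using tau
   (independent randomization; the game is symmetric). *)
Definition exp_payoff {R : realType} (alpha : R) (N K : nat)
  (sigma tau : {ffun alloc N K -> R}) : R :=
  \sum_s \sum_t sigma s * tau t * payoff alpha s t.

Definition nash {R : realType} (alpha : R) (N K : nat)
  (sA sB : {ffun alloc N K -> R}) : Prop :=
  mixed sA /\ mixed sB /\
  (forall d, mixed d -> exp_payoff alpha d sB <= exp_payoff alpha sA sB) /\
  (forall d, mixed d -> exp_payoff alpha d sA <= exp_payoff alpha sB sA).

Definition Kstar {R : realType} (alpha : R) (N K : nat) : R :=
  (N * K)%N%:R / (2 * N + K)%N%:R * (1 - alpha / (2%:R - alpha)).

Definition nsupp (N K : nat) (s : alloc N K) : nat :=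
  #|[set k : 'I_K | (0 < s k)%N]|.

(* Main.v *)
Require Import Defs.
From HB Require Import structures.
From mathcomp Require Import all_boot all_order all_algebra.
From mathcomp Require Import reals.
From mathcomp Require Import ring lra zify.
Import Order.TTheory GRing.Theory Num.Theory.
Local Open Scope ring_scope.

Lemma g_formula (R : realType) (a : R) (M j : nat) :
  \sum_(y < M) ((j < y)%N%:R + a * (y == j :> nat)%:R) =
  if (j < M)%N then M%:R - 1 - j%:R + a else 0.
Proof.
elim: M => [|M IH]; first by rewrite big_ord0.
rewrite big_ord_recr /= IH.
case: (ltngtP j M) => hjM.
- rewrite ltnS (ltnW hjM) mulr0 addr0 -natr1 /=. lra.
- rewrite ltnS leqNgt hjM /= mulr0 !addr0 //.
- rewrite hjM ltnSn mulr1 -natr1 /=. lra.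
Qed.

Lemma g_lb (R : realType) (a : R) (M j : nat) : 0 <= a -> a < 1 ->
  M%:R - 1 - j%:R + a <= \sum_(y < M) ((j < y)%N%:R + a * (y == j :> nat)%:R).
Proof.
move=> a0 a1; rewrite g_formula; case: ltnP => // hMj.
have : (M%:R <= j%:R :> R) by rewrite ler_nat.
lra.
Qed.

Definition dev (N K m h : nat) (x : nat) : alloc N K :=
  [ffun k : 'I_K => inord (if (k < h)%N then x else (2 * m - x)%N)].

Lemma dev_val (N K m h x : nat) (k : 'I_K) : (2 * m <= N)%N -> (x <= 2 * m)%N ->
  (dev N K m h x k : nat) = if (k < h)%N then x else (2 * m - x)%N.
Proof.
move=> h1 h2; rewrite /dev ffunE inordK //.
case: ifP => _; rewrite ltnS; [exact: leq_trans h2 h1|].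
exact: leq_trans (leq_subr _ _) h1.
Qed.

Lemma dev_S (N K m h x : nat) : N = (m * K)%N -> K = (h + h)%N -> (0 < h)%N ->
  (x <= 2 * m)%N -> in_S (dev N K m h x).
Proof.
move=> hN hK h0 hx.
have h2m : (2 * m <= N)%N by rewrite hN hK; nia.
rewrite /in_S.
rewrite (eq_bigr (fun k : 'I_K => if (k < h)%N then x else (2 * m - x)%N)); last first.
  by move=> k _; rewrite dev_val.
rewrite -(big_mkord xpredT (fun k => if (k < h)%N then x else (2 * m - x)%N)).
rewrite (@big_cat_nat _ _ _ h) //; last by rewrite hK leq_addr.
rewrite (@eq_big_nat _ _ _ 0 h _ (fun _ => x)); last by move=> i /andP[_ ->].
rewrite (@eq_big_nat _ _ _ h K _ (fun _ => (2 * m - x)%N)); last first.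
  by move=> i /andP[hi _]; rewrite ltnNge hi.
rewrite !sum_nat_const_nat hN hK /= addnK subn0 -mulnDr subnKC //; apply/eqP; nia.
Qed.

Lemma dev_reindex (R : realType) (F : nat -> R) N K m h (k : 'I_K) : (2 * m <= N)%N ->
  \sum_(x < (2 * m).+1) F (dev N K m h x k : nat) = \sum_(y < (2 * m).+1) F y.
Proof.
move=> h2m.
transitivity (\sum_(x < (2 * m).+1) F (if (k < h)%N then (x : nat) else (2 * m - x)%N)).
  by apply: eq_bigr => x _; rewrite dev_val // -ltnS.
case: (k < h)%N => //.
rewrite (reindex_inj rev_ord_inj) /=; apply: eq_bigr => x _.
by rewrite subSS subKn // -ltnS.
Qed.

Lemma dev_lb (R : realType) (alpha : R) N K m h (t : alloc N K) :
  N = (m * K)%N -> K = (h + h)%N -> (0 < h)%N -> 0 <= alpha -> alpha < 1 -> in_S t ->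
  K%:R * ((2 * m)%:R + alpha / 2%:R) - N%:R <=
  \sum_(x < (2 * m).+1) payoff alpha (dev N K m h x) t.
Proof.
move=> hN hK h0 a0 a1 ht.
have h2m : (2 * m <= N)%N by rewrite hN hK; nia.
rewrite /payoff exchange_big /=.
have -> : K%:R * ((2 * m)%:R + alpha / 2%:R) - N%:R =
   \sum_(k < K) (((2 * m).+1)%:R - 1 - (t k : nat)%:R + alpha / 2%:R) :> R.
  rewrite big_split /= big_split /= sumrN -natr_sum (eqP ht) sumr_const card_ord.
  rewrite sumr_const card_ord -mulr_natl -natr1. lra.
apply: ler_sum => k _.
rewrite (@dev_reindex R (fun y => (((t k : nat) < y)%N%:R + alpha / 2%:R * (y == t k :> nat)%:R))) //.
apply: g_lb; lra.
Qed.


Lemma s_ub (R : realType) (alpha : R) N K (s t : alloc N K) : 0 <= alpha -> alpha < 1 ->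
  payoff alpha s t <= K%:R * (alpha / 2%:R) + (1 - alpha / 2%:R) * (nsupp s)%:R.
Proof.
move=> a0 a1.
have -> : K%:R * (alpha / 2%:R) + (1 - alpha / 2%:R) * (nsupp s)%:R =
   \sum_(k < K) (alpha / 2%:R + (1 - alpha / 2%:R) * (if (0 < s k)%N then 1 else 0)) :> R.
  rewrite big_split /= sumr_const card_ord -mulr_sumr -big_mkcond /= sumr_const.
  by rewrite /nsupp cardsE mulr_natl.
apply: ler_sum => k _.
case: (posnP (s k)) => hs.
  rewrite hs /= mulr0 addr0 add0r.
  case: (_ == _); rewrite /= ?mulr1 ?mulr0; lra.
rewrite mulr1.
case: eqP => he.
  by rewrite he ltnn /= mulr1 add0r; lra.
rewrite mulr0 addr0; case: ltnP => _ /=; lra.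
Qed.

Lemma delta1 (R : realType) (T : finType) (G : T -> R) (s : T) :
  \sum_u G u * (u == s)%:R = G s.
Proof.
rewrite (bigD1 s) //= eqxx mulr1 big1 ?addr0 // => u /negbTE ->; by rewrite mulr0.
Qed.

Lemma delta2 (R : realType) (T : finType) (G : T -> R) (s : T) :
  \sum_u (s == u)%:R * G u = G s.
Proof.
rewrite (bigD1 s) //= eqxx mul1r big1 ?addr0 // => u hu.
by rewrite eq_sym (negbTE hu) mul0r.
Qed.

Lemma dsum (R : realType) (T : finType) (sg : T -> R) (c r : R) (s : T) (M : nat)
  (dv : 'I_M -> T) (G : T -> R) :
  \sum_u (sg u - c * (u == s)%:R + r * \sum_(x < M) (dv x == u)%:R) * G u =
  \sum_u sg u * G u - c * G s + r * \sum_(x < M) G (dv x).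
Proof.
transitivity (\sum_u (sg u * G u - c * (G u * (u == s)%:R) +
                      r * \sum_(x < M) ((dv x == u)%:R * G u))).
  by apply: eq_bigr => u _; rewrite -big_distrl /=; ring.
rewrite big_split /= sumrB -!mulr_sumr delta1 exchange_big /=.
congr (_ + _ * _); apply: eq_bigr => x _; exact: delta2.
Qed.

Lemma no_mass (R : realType) (alpha : R) N K (sg tau : {ffun alloc N K -> R})
  (s : alloc N K) (M : nat) (dv : 'I_M -> alloc N K) :
  (0 < M)%N -> mixed sg ->
  (forall d, mixed d -> exp_payoff alpha d tau <= exp_payoff alpha sg tau) ->
  (forall x, in_S (dv x)) -> in_S s ->
  M%:R * (\sum_t tau t * payoff alpha s t) <
    \sum_(x < M) \sum_t tau t * payoff alpha (dv x) t ->
  sg s = 0.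
Proof.
move=> M0 [h0 [hout hsum]] hne hdv hs hlt.
set F := fun u => \sum_t tau t * payoff alpha u t.
have lin : forall sg', exp_payoff alpha sg' tau = \sum_u sg' u * F u.
  move=> sg'; apply: eq_bigr => u _; rewrite /F big_distrr; apply: eq_bigr => t _.
  by rewrite /= mulrA.
have := h0 s; rewrite le0r => /orP [/eqP //|cpos].
set c := sg s in cpos.
have Mpos : (0 < M%:R :> R) by rewrite ltr0n.
pose d := [ffun u => sg u - c * (u == s)%:R + c / M%:R * \sum_(x < M) (dv x == u)%:R].
have dE : forall G, \sum_u d u * G u = \sum_u sg u * G u - c * G s + c / M%:R * \sum_(x < M) G (dv x).
  move=> G; rewrite -dsum; apply: eq_bigr => u _; by rewrite ffunE.
have md : mixed d.
  split.
    move=> u; rewrite ffunE; apply: addr_ge0.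
      case: (eqVneq u s) => [->|hu]; first by rewrite ?eqxx /= ?mulr1 subrr.
      by rewrite ?(negbTE hu) /= mulr0 subr0.
    apply: mulr_ge0; first by apply: divr_ge0; [exact: ltW|exact: ltW].
    by apply: sumr_ge0 => x _; rewrite ler0n.
  split.
    move=> u hu; rewrite ffunE hout //.
    have -> : (u == s) = false by apply/eqP => e; rewrite e hs in hu.
    rewrite big1 ?mulr0 ?subrr ?addr0 // => x _.
    by have -> : (dv x == u) = false by apply/eqP => e; rewrite -e hdv in hu.
  have := dE (fun _ => 1); rewrite /=.
  under eq_bigr do rewrite mulr1.
  move=> ->; under eq_bigr do rewrite mulr1.
  rewrite hsum sumr_const card_ord mulr1 -mulrA mulVf ?mulr1 ?subrK //.
  by rewrite gt_eqF.
have hle := hne d md; rewrite !lin dE -/c in hle; exfalso; move: hle.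
apply/negP; rewrite -ltNge -subr_gt0.
have -> : \sum_u sg u * F u - c * F s + c / M%:R * \sum_(x < M) F (dv x) - \sum_u sg u * F u
   = c / M%:R * (\sum_(x < M) F (dv x) - M%:R * F s).
  by field; rewrite gt_eqF.
apply: mulr_gt0; first by apply: divr_gt0.
by rewrite subr_gt0.
Qed.

Lemma arith (R : realType) (alpha nr mr Kr : R) :
  0 <= alpha -> alpha < 1 -> 0 < Kr -> 0 <= mr ->
  nr < (mr * Kr * Kr) / (2 * (mr * Kr) + Kr) * (1 - alpha / (2 - alpha)) ->
  (2 * mr + 1) * (Kr * (alpha / 2) + (1 - alpha / 2) * nr) <
  Kr * (2 * mr + alpha / 2) - mr * Kr.
Proof.
move=> a0 a1 K0 m0 hs.
have hpos : 0 < (2 * (mr * Kr) + Kr) * (2 - alpha) by apply: mulr_gt0; nra.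
have := ltr_pM2r hpos; move=> e; rewrite -e in hs.
have ee : mr * Kr * Kr / (2 * (mr * Kr) + Kr) * (1 - alpha / (2 - alpha)) *
   ((2 * (mr * Kr) + Kr) * (2 - alpha)) = mr * Kr * Kr * (2 - 2 * alpha).
  field; apply/andP; split; apply: lt0r_neq0 => //; nra.
rewrite ee in hs.
have hs2 : Kr * (nr * (2 * mr + 1) * (2 - alpha)) < Kr * (mr * Kr * (2 - 2 * alpha)).
  move: hs; congr (_ < _); ring.
rewrite ltr_pM2l // in hs2.
nra.
Qed.

Lemma gap (R : realType) (alpha : R) N K m h (s : alloc N K) (tau : {ffun alloc N K -> R}) :
  N = (m * K)%N -> K = (h + h)%N -> (0 < h)%N -> 0 <= alpha -> alpha < 1 ->
  (nsupp s)%:R < Kstar alpha N K -> mixed tau ->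
  ((2 * m).+1)%:R * (\sum_t tau t * payoff alpha s t) <
    \sum_(x < (2 * m).+1) \sum_t tau t * payoff alpha (dev N K m h x) t.
Proof.
move=> hN hK h0 a0 a1 hsupp [t0 [tout tsum]].
set C := K%:R * (alpha / 2%:R) + (1 - alpha / 2%:R) * (nsupp s)%:R.
set L := K%:R * ((2 * m)%:R + alpha / 2%:R) - N%:R.
have h1 : \sum_t tau t * payoff alpha s t <= C.
  apply: le_trans (_ : \sum_t tau t * C <= C).
    by apply: ler_sum => t _; apply: ler_wpM2l => //; apply: s_ub.
  by rewrite -mulr_suml tsum mul1r.
have h2 : L <= \sum_(x < (2 * m).+1) \sum_t tau t * payoff alpha (dev N K m h x) t.
  rewrite exchange_big /=.
  apply: le_trans (_ : \sum_t tau t * L <= _); first by rewrite -mulr_suml tsum mul1r.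
  apply: ler_sum => t _; rewrite -mulr_sumr.
  case ht: (in_S t); last by rewrite tout ?ht // !mul0r.
  by apply: ler_wpM2l => //; apply: dev_lb.
suff h3 : ((2 * m).+1)%:R * C < L.
  apply: le_lt_trans (_ : _ <= ((2 * m).+1)%:R * C) (lt_le_trans h3 h2).
  by apply: ler_wpM2l => //; rewrite ler0n.
have K0 : (0 < K%:R :> R) by rewrite ltr0n hK; lia.
have eN : (N%:R : R) = m%:R * K%:R by rewrite hN natrM.
have hs' : (nsupp s)%:R < m%:R * K%:R * K%:R / (2 * (m%:R * K%:R) + K%:R) * (1 - alpha / (2 - alpha)) :> R.
  by move: hsupp; rewrite /Kstar natrD !natrM eN.
have := @arith R alpha _ _ _ a0 a1 K0 (ler0n _ m) hs'.
rewrite /C /L -natr1 natrM eN => H.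
lra.
Qed.

Theorem proposition3 (R : realType) (N K : nat) (alpha : R)
  (hN : (1 <= N)%N) (hK : (2 <= K)%N) (hKeven : ~~ odd K) (hKN : (K %| N)%N)
  (ha0 : 0 <= alpha) (ha1 : alpha < 1)
  (s : alloc N K) (hs : in_S s) (hsupp : (nsupp s)%:R < Kstar alpha N K)
  (sA sB : {ffun alloc N K -> R}) (hNE : nash alpha sA sB) :
  sA s = 0 /\ sB s = 0.
Proof.
case: hNE => [mA [mB [nA nB]]].
set m := (N %/ K)%N; set h := K./2.
have eN : N = (m * K)%N by rewrite divnK.
have eK : K = (h + h)%N.
  by rewrite addnn /h -[LHS](odd_double_half K) (negbTE hKeven).
have h0 : (0 < h)%N by move: hK; rewrite eK; lia.
have hdv : forall x : 'I_(2 * m).+1, in_S (dev N K m h x).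
  by move=> x; apply: dev_S => //; rewrite -ltnS.
split.
  apply: (@no_mass R alpha N K sA sB s _ (fun x : 'I_(2 * m).+1 => dev N K m h x)) mA nA hdv hs _ => //.
  exact: gap.
apply: (@no_mass R alpha N K sB sA s _ (fun x : 'I_(2 * m).+1 => dev N K m h x)) mB nB hdv hs _ => //.
exact: gap.
Qed.
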